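(* For all $n\geq1$ and all formulas $\phi,\chi_1,\dots,\chi_n\in\mathcal{L}(\nabla,\bullet)$, $$\vdash_{\mathbf{K}^{\nabla\bullet}}\Delta\Big(\bigwedge_{k=1}^n\chi_k\to\phi\Big)\land\bigwedge_{k=1}^n\circ(\neg\phi\to\chi_k)\land\phi\to\Delta\phi.$$
   Context: $\mathcal{L}(\nabla,\bullet)$: $\phi::=p\mid\neg\phi\mid\phi\land\phi\mid\nabla\phi\mid\bullet\phi$ over a nonempty set of propositional variables; $\Delta\phi:=\neg\nabla\phi$, $\circ\phi:=\neg\bullet\phi$. The Hilbert system $\mathbf{K}^{\nabla\bullet}$ has axioms: A0 all instances of propositional tautologies; A1 $\bullet\phi\to\phi$; A2 $\nabla\phi\leftrightarrow\nabla\neg\phi$; A3 $\bullet(\psi\to\phi)\land\phi\to\bullet\phi$; A4 $\nabla(\phi\land\psi)\to\nabla\phi\vee\nabla\psi$; A5 $\bullet(\phi\land\psi)\to\bullet\phi\vee\bullet\psi$; A6 $\nabla\phi\to\bullet\phi\vee\bullet\neg\phi$; A7 $\bullet(\phi\to\psi)\land\bullet(\neg\phi\to\chi)\to\nabla\phi$; and rules: R1 from $\phi$ infer $\Delta\phi$; R2 from $\phi$ infer $\circ\phi$; R3 from $\phi\leftrightarrow\psi$ infer $\Delta\phi\leftrightarrow\Delta\psi$; R4 from $\phi\leftrightarrow\psi$ infer $\circ\phi\leftrightarrow\circ\psi$; MP. *)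

(* Defs.v *)
From Stdlib Require Import List Arith.

Inductive form : Type :=
| Var : nat -> form
| Neg : form -> form
| And : form -> form -> form
| Nab : form -> form      (* nabla : non-contingency-negated, i.e. contingency *)
| Bul : form -> form.

Definition Or (a b : form) : form := Neg (And (Neg a) (Neg b)).
Definition Imp (a b : form) : form := Neg (And a (Neg b)).
Definition Iff (a b : form) : form := And (Imp a b) (Imp b a).
Definition Del (a : form) : form := Neg (Nab a).
Definition Circ (a : form) : form := Neg (Bul a).

Fixpoint peval (v : form -> bool) (f : form) : bool :=
  match f with
  | Var _ => v f
  | Neg a => negb (peval v a)
  | And a b => andb (peval v a) (peval v b)
  | Nab _ => v f
  | Bul _ => v f
  end.

(* Instances of propositional tautologies: modal subformulas (and variables)
   are treated as atoms. *)
Definition taut (f : form) : Prop := forall v : form -> bool, peval v f = true.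

Inductive derivable : form -> Prop :=
| A0 : forall f, taut f -> derivable f
| A1 : forall p, derivable (Imp (Bul p) p)
| A2 : forall p, derivable (Iff (Nab p) (Nab (Neg p)))
| A3 : forall p q, derivable (Imp (And (Bul (Imp q p)) p) (Bul p))
| A4 : forall p q, derivable (Imp (Nab (And p q)) (Or (Nab p) (Nab q)))
| A5 : forall p q, derivable (Imp (Bul (And p q)) (Or (Bul p) (Bul q)))
| A6 : forall p, derivable (Imp (Nab p) (Or (Bul p) (Bul (Neg p))))
| A7 : forall p q r,
    derivable (Imp (And (Bul (Imp p q)) (Bul (Imp (Neg p) r))) (Nab p))
| R1 : forall p, derivable p -> derivable (Del p)
| R2 : forall p, derivable p -> derivable (Circ p)
| R3 : forall p q, derivable (Iff p q) -> derivable (Iff (Del p) (Del q))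
| R4 : forall p q, derivable (Iff p q) -> derivable (Iff (Circ p) (Circ q))
| MP : forall p q, derivable (Imp p q) -> derivable p -> derivable q.

Fixpoint bigAnd_from (f : nat -> form) (k m : nat) : form :=
  match m with
  | 0 => f k               (* degenerate; not used *)
  | 1 => f k
  | S m' => And (f k) (bigAnd_from f (S k) m')
  end.

Definition bigAnd (f : nat -> form) (n : nat) : form := bigAnd_from f 1 n.

(* Main.v *)
Require Import Defs.
From Stdlib Require Import List Arith Bool.

Lemma tmp (a b : form) : derivable a -> taut (Imp a b) -> derivable b.
Proof. intros Ha Ht. apply (MP a b); [apply A0; exact Ht | exact Ha]. Qed.

Lemma dand (a b : form) : derivable a -> derivable b -> derivable (And a b).
Proof.
  intros Ha Hb. apply (MP b); [|exact Hb].
  apply (MP a); [|exact Ha].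
  apply A0. intro v. simpl. destruct (peval v a), (peval v b); reflexivity.
Qed.

Ltac crush :=
  let v := fresh "v" in intro v; simpl;
  repeat match goal with |- context [v ?x] => destruct (v x) end.

Lemma bul_circ (psi : nat -> form) : forall m k,
  derivable (Neg (And (Bul (bigAnd_from psi k m))
                      (bigAnd_from (fun j => Circ (psi j)) k m))).
Proof.
  induction m as [|m IH]; intro k.
  - apply A0. crush; simpl; reflexivity.
  - destruct m as [|m].
    + apply A0. crush; simpl; reflexivity.
    + change (derivable (Neg (And (Bul (And (psi k) (bigAnd_from psi (S k) (S m))))
                (And (Circ (psi k)) (bigAnd_from (fun j => Circ (psi j)) (S k) (S m)))))).
      generalize (IH (S k)) (A5 (psi k) (bigAnd_from psi (S k) (S m))).
      generalize (bigAnd_from psi (S k) (S m)) (bigAnd_from (fun j => Circ (psi j)) (S k) (S m)).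
      intros B D H1 H2.
      eapply tmp. apply dand. exact H1. exact H2.
      crush; destruct (peval v D); reflexivity.
Qed.

Lemma peval_big (phi : form) (chi : nat -> form) v : forall m k,
  peval v (bigAnd_from (fun j => Imp (Neg phi) (chi j)) k m)
  = peval v phi || peval v (bigAnd_from chi k m).
Proof.
  induction m as [|m IH]; intro k.
  - simpl. destruct (peval v phi), (peval v (chi k)); reflexivity.
  - destruct m as [|m].
    + simpl. destruct (peval v phi), (peval v (chi k)); reflexivity.
    + change (peval v (And (Imp (Neg phi) (chi k))
               (bigAnd_from (fun j => Imp (Neg phi) (chi j)) (S k) (S m)))
              = peval v phi || peval v (And (chi k) (bigAnd_from chi (S k) (S m)))).
      cbn [peval]. rewrite IH. unfold Imp. cbn [peval].
      destruct (peval v phi), (peval v (chi k)), (peval v (bigAnd_from chi (S k) (S m)));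
        reflexivity.
Qed.

Lemma core (phi X C' Ci : form) :
  (forall v, peval v C' = peval v phi || peval v X) ->
  derivable (Neg (And (Bul C') Ci)) ->
  derivable (Imp (And (And (Del (Imp X phi)) Ci) phi) (Del phi)).
Proof.
  intros H F6.
  assert (F1 : derivable (Iff (Del phi) (Del (And (Imp X phi) (Or X phi))))).
  { apply R3. apply A0. intro v. simpl.
    destruct (peval v phi), (peval v X); reflexivity. }
  assert (F3 : derivable (Iff (Del (Or X phi)) (Del C'))).
  { apply R3. apply A0. intro v. simpl. rewrite H.
    destruct (peval v phi), (peval v X); reflexivity. }
  pose proof (A4 (Imp X phi) (Or X phi)) as F2.
  pose proof (A6 C') as F4.
  pose proof (A1 (Neg C')) as F5.
  eapply tmp.
  apply dand; [exact F1|]. apply dand; [exact F2|]. apply dand; [exact F3|].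
  apply dand; [exact F4|]. apply dand; [exact F5|]. exact F6.
  intro v. simpl. rewrite !H.
  repeat match goal with |- context [v ?x] => destruct (v x) end;
  destruct (peval v phi), (peval v X), (peval v Ci); reflexivity.
Qed.

Theorem proposition8 (n : nat) (phi : form) (chi : nat -> form) :
  1 <= n ->
  derivable
    (Imp (And (And (Del (Imp (bigAnd chi n) phi))
                   (bigAnd (fun k => Circ (Imp (Neg phi) (chi k))) n))
              phi)
         (Del phi)).
Proof.
  intros _.
  apply (core phi (bigAnd chi n) (bigAnd (fun j => Imp (Neg phi) (chi j)) n)).
  - intro v. unfold bigAnd. apply peval_big.
  - apply (bul_circ (fun j => Imp (Neg phi) (chi j)) n 1).
Qed.
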